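(* Let $n\ge1$, let $(H_k)_{k=0}^{n-1}$ and $(G_j)_{j=0}^{n-1}$ be two indexed families of $n\times n$ Hadamard matrices, and let $\mathcal P$ and $\mathcal Q$ be left orthogonal Latin squares of order $n$. Then the bases $B(\mathcal P,(H_k))$ and $B(\mathcal Q,(G_j))$ of $\mathbb C^n\otimes\mathbb C^n$ are mutually unbiased: $|\langle a|b\rangle|^2=\frac1{n^2}$ for every state $\ket a$ of the first and every state $\ket b$ of the second.
   Context: $\{\ket k\}_{k=0}^{n-1}$ is the computational basis of $\mathbb C^n$. A quantum Latin square (QLS) of order $n$ is an $n\times n$ array of vectors of $\mathbb C^n$ in which every row and column is an orthonormal basis; the entry in column $i$, row $j$ of $\mathcal Q$ is $\ket{Q_{ij}}$. A Latin square is a QLS all of whose entries are computational basis states; identify it with labels $L_{ij}\in\{0,\dots,n-1\}$. Two Latin squares $A,B$ are orthogonal if the pairs $(A_{ij},B_{ij})$ over all positions give all $n^2$ pairs of labels. The left conjugate $L'$ of a Latin square $L$ is defined by $L'_{ik}=j$ iff $L_{ij}=k$; two Latin squares are left orthogonal if their left conjugates are orthogonal. A Hadamard matrix of order $n$ is an $n\times n$ complex matrix $H$ with $|H_{ij}|=1$ and $HH^\dagger=H^\dagger H=nI_n$. Given a QLS $\mathcal Q$ and Hadamards $(H_j)_{j=0}^{n-1}$, $B(\mathcal Q,(H_j))$ is the orthonormal basis of $\mathbb C^n\otimes\mathbb C^n$ consisting of $A_{ij}=\frac1{\sqrt n}\sum_{k}\ket k\otimes\ket{Q_{kj}}\bra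 kH_j\ket i$, $i,j\in\{0,\dots,n-1\}$. *)

(* Defs.v *)
From HB Require Import structures.
From mathcomp Require Import all_boot all_order all_algebra all_field.
Set Implicit Arguments. Unset Strict Implicit. Unset Printing Implicit Defensive.
Import Order.TTheory GRing.Theory Num.Theory.
Local Open Scope ring_scope.

(* A Latin square of order n: L i j = label of the entry in column i, row j. *)
Definition latin_square (n : nat) (L : 'I_n -> 'I_n -> 'I_n) : Prop :=
  (forall i, injective (L i)) /\ (forall j, injective (fun i => L i j)).

Definition orthogonal_ls (n : nat) (A B : 'I_n -> 'I_n -> 'I_n) : Prop :=
  forall a b : 'I_n, exists i j, A i j = a /\ B i j = b.

(* Left conjugate: L'_{ik} = j iff L_{ij} = k. *)
Definition left_conjugate (n : nat) (L : 'I_n -> 'I_n -> 'I_n) : 'I_n -> 'I_n -> 'I_n :=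
  fun i k => odflt i [pick j | L i j == k].

Definition left_orthogonal (n : nat) (A B : 'I_n -> 'I_n -> 'I_n) : Prop :=
  orthogonal_ls (left_conjugate A) (left_conjugate B).

Definition adjmx (n : nat) (H : 'M[algC]_n) : 'M[algC]_n := (map_mx Num.conj H)^T.

Definition hadamard (n : nat) (H : 'M[algC]_n) : Prop :=
  (forall i j, `|H i j| = 1) /\
  H *m adjmx H = (n%:R : algC)%:M /\ adjmx H *m H = (n%:R : algC)%:M.

(* Vectors of C^n (x) C^n, indexed by pairs (k, l) <-> |k> (x) |l>. *)
Definition inner (n : nat) (a b : 'I_n * 'I_n -> algC) : algC :=
  \sum_(x : 'I_n * 'I_n) (a x)^* * b x.

(* The state A_ij of B(Q, (H_j)) for a Latin square L (Q_kj = |L k j>):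
   A_ij = 1/sqrt n * sum_k |k> (x) |L k j> <k|H_j|i>. *)
Definition Bstate (n : nat) (L : 'I_n -> 'I_n -> 'I_n) (H : 'I_n -> 'M[algC]_n)
  (i j : 'I_n) : 'I_n * 'I_n -> algC :=
  fun x => (x.2 == L x.1 j)%:R * H j x.1 i / sqrtC (n%:R).

(* Main.v *)
Require Import Defs.
From HB Require Import structures.
From mathcomp Require Import all_boot all_order all_algebra all_field.
Import Order.TTheory GRing.Theory Num.Theory.
Local Open Scope ring_scope.

Lemma lc_spec (n : nat) (L : 'I_n -> 'I_n -> 'I_n) k l j :
  injective (L k) -> (left_conjugate L k l == j) = (L k j == l).
Proof.
move=> inj; rewrite /left_conjugate.
case: pickP => [j0 /eqP Hj0|H0] /=.
  apply/eqP/eqP => [<-//|Hj]; apply: inj; by rewrite Hj0 Hj.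
have /codomP [j1 Hj1] : l \in codom (L k) by apply: inj_card_onto.
by move: (H0 j1); rewrite Hj1 eqxx.
Qed.

Theorem corollary27 (n : nat) (Hn : (0 < n)%N)
  (H G : 'I_n -> 'M[algC]_n)
  (HH : forall k, hadamard (H k)) (HG : forall j, hadamard (G j))
  (P Q : 'I_n -> 'I_n -> 'I_n)
  (LP : latin_square P) (LQ : latin_square Q) (PQ : left_orthogonal P Q) :
  forall i j i' j' : 'I_n,
    `|inner (Bstate P H i j) (Bstate Q G i' j')| ^+ 2 = ((n%:R : algC) ^+ 2)^-1.
Proof.
move=> i j i' j'.
case: LP => LP1 _; case: LQ => LQ1 _.
pose f (x : 'I_n * 'I_n) := (left_conjugate P x.1 x.2, left_conjugate Q x.1 x.2).
have fsurj : forall y, y \in codom f.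
  move=> [a b]; case: (PQ a b) => k [l [e1 e2]].
  by apply/codomP; exists (k, l); rewrite /f /= e1 e2.
have finj : injective f.
  pose g y := iinv (fsurj y).
  have gK : cancel g f by move=> y; rewrite /g f_iinv.
  have ginj : injective g := can_inj gK.
  move=> x1 x2.
  have /codomP [y1 ->] := injF_onto ginj x1.
  have /codomP [y2 ->] := injF_onto ginj x2.
  move=> Hx; congr g; exact: (etrans (esym (gK y1)) (etrans Hx (gK y2))).
case: (PQ j j') => k0 [l0 [e1 e2]].
have Pk0 : P k0 j = l0 by apply/eqP; rewrite -lc_spec // e1.
have Qk0 : Q k0 j' = l0 by apply/eqP; rewrite -lc_spec // e2.
have uniq : forall k, P k j = Q k j' -> k = k0.
  move=> k Hk.
  have: f (k, P k j) = f (k0, l0).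
    rewrite /f /= e1 e2; congr pair; apply/eqP; rewrite lc_spec //.
    by rewrite Hk.
  by move/finj => [].
rewrite /inner (bigD1 (k0, l0)) //= big1 ?addr0; last first.
  move=> [k l] /= Hne; rewrite /Bstate /=.
  have [El|Nl] := eqVneq l (P k j); last by rewrite /= mul0r mul0r conjC0 mul0r.
  have [El'|Nl'] := eqVneq l (Q k j'); last by rewrite /= !mul0r mulr0.

  have ek : k = k0 by apply: uniq; rewrite -El -El'.
  by move: Hne; rewrite El ek Pk0 eqxx.
rewrite /Bstate /= Pk0 Qk0 eqxx !mul1r.
rewrite !normrM norm_conjC !normrM ?normfV (HH j).1 (HG j').1 !mul1r ger0_norm ?sqrtC_ge0 ?ler0n //.
by rewrite -invfM -expr2 sqrtCK -exprVn.
Qed.
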